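(* Consider an NCG whose consumption price functions are $\tau_a(t)=\gamma_a t^{\beta}+\eta_a$ with constants $\gamma_a>0$, $\eta_a>0$ ($a\in A$) and $\beta\ge0$ independent of $a$. For a user volume vector $d$ let $d_{\min}=\min\{d_k:k=1,\dots,K\}$. Then there is a constant $c>0$ depending only on the game structure ($A$, $\mathcal S$, $r$, $\gamma_a$, $\eta_a$, $\beta$) such that for every user volume vector $d$ with $d_{\min}>0$, every SO-profile for $d$ is an $\epsilon$-approximate NE-profile with $\epsilon=c\, d_{\min}^{-\beta}$; that is, SO-profiles are $O(d_{\min}^{-\beta})$-approximate NE-profiles.
   Context: A non-atomic congestion game (NCG) consists of: a finite set $A$ of resources; an integer $K\ge 1$ of user groups; pairwise disjoint finite nonempty strategy sets $\mathcal S_1,\dots,\mathcal S_K$, $\mathcal S=\bigcup_k\mathcal S_k$; constants $r(a,s)\ge 0$ with $\sum_{a} r(a,s)>0$ for every $s$ and $\sum_{s} r(a,s)>0$ for every $a$; continuous nondecreasing consumption price functions $\tau_a:[0,\infty)\to[0,\infty)$; and a user volume vector $d\in\mathbb R_{\ge0}^K$. A feasible profile for $d$ is $f=(f_s)_{s\in\mathcal S}$, $f_s\ge0$, $\sum_{s\in\mathcal S_k}f_s=d_k$; loads $f_a=\sum_s r(a,s)f_s$, strategy prices $\tau_s(f)=\sum_a r(a,s)\tau_a(f_a)$, cost $C(f)=\sum_a f_a\tau_a(f_a)$. An SO-profile is a feasible profile minimizing $C$. For $\epsilon>0$, a feasible profile $f$ is an $\epsilon$-approximate NE-profile if for every $k$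 and all $s,s'\in\mathcal S_k$ with $f_s>0$, $\tau_s(f)\le(1+\epsilon)\tau_{s'}(f)$. (Routing games with BPR travel times $\tau_a(x)=\tau_a(0)(1+\alpha(x/u_a)^\beta)$ are the motivating special case.) *)

(* Defs.v *)
From Stdlib Require Import Reals Lra Lia List.
Import ListNotations.
Open Scope R_scope.

(* Game data: resources A = {0,...,nA-1}, strategies S = {0,...,nS-1},
   groups {0,...,K-1}; grp s is the group k with s in S_k (so the S_k are
   pairwise disjoint by construction); r a s = r(a,s). *)

Definition rsum (n : nat) (F : nat -> R) : R :=
  fold_right Rplus 0 (map F (seq 0 n)).

(* t^b for t >= 0 and b >= 0, with the convention 0^0 = 1 and 0^b = 0 for b > 0 *)
Definition rpow (t b : R) : R :=
  if Rle_dec t 0 then (if Req_EM_T b 0 then 1 else 0) else Rpower t b.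

Definition tau (gam eta : nat -> R) (beta : R) (a : nat) (t : R) : R :=
  gam a * rpow t beta + eta a.

Definition feasible (nS K : nat) (grp : nat -> nat) (d : nat -> R) (f : nat -> R) : Prop :=
  (forall s, (s < nS)%nat -> 0 <= f s) /\
  (forall k, (k < K)%nat ->
     rsum nS (fun s => if Nat.eqb (grp s) k then f s else 0) = d k).

Definition load (nS : nat) (r : nat -> nat -> R) (f : nat -> R) (a : nat) : R :=
  rsum nS (fun s => r a s * f s).

Definition sprice (nA nS : nat) (r : nat -> nat -> R) (gam eta : nat -> R) (beta : R)
  (f : nat -> R) (s : nat) : R :=
  rsum nA (fun a => r a s * tau gam eta beta a (load nS r f a)).

Definition cost (nA nS : nat) (r : nat -> nat -> R) (gam eta : nat -> R) (beta : R)
  (f : nat -> R) : R :=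
  rsum nA (fun a => load nS r f a * tau gam eta beta a (load nS r f a)).

Definition SO_profile (nA nS K : nat) (grp : nat -> nat) (r : nat -> nat -> R)
  (gam eta : nat -> R) (beta : R) (d f : nat -> R) : Prop :=
  feasible nS K grp d f /\
  forall g, feasible nS K grp d g ->
    cost nA nS r gam eta beta f <= cost nA nS r gam eta beta g.

Definition approx_NE (nA nS K : nat) (grp : nat -> nat) (r : nat -> nat -> R)
  (gam eta : nat -> R) (beta : R) (eps : R) (d f : nat -> R) : Prop :=
  feasible nS K grp d f /\
  forall s s', (s < nS)%nat -> (s' < nS)%nat -> grp s = grp s' -> 0 < f s ->
    sprice nA nS r gam eta beta f s <= (1 + eps) * sprice nA nS r gam eta beta f s'.

Definition dmin (K : nat) (d : nat -> R) : R :=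
  fold_right Rmin (d 0%nat) (map d (seq 0 K)).

(* Main.v *)
Require Import Defs.
From Stdlib Require Import Reals Lra Lia List Classical.
Open Scope R_scope.

Lemma fold_plus_shift (l : list R) a : fold_right Rplus a l = fold_right Rplus 0 l + a.
Proof. induction l; simpl; [ring| rewrite IHl; ring]. Qed.

Lemma rsum_0 F : rsum 0 F = 0.
Proof. reflexivity. Qed.

Lemma rsum_S n F : rsum (S n) F = rsum n F + F n.
Proof.
  unfold rsum. rewrite seq_S, map_app, fold_right_app. simpl.
  rewrite fold_plus_shift. ring.
Qed.

Lemma rsum_ext n F G : (forall i, (i < n)%nat -> F i = G i) -> rsum n F = rsum n G.
Proof.
  induction n; intros H; [reflexivity|]. rewrite !rsum_S, IHn, H; auto; intros; apply H; lia.
Qed.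

Lemma rsum_plus n F G : rsum n (fun i => F i + G i) = rsum n F + rsum n G.
Proof. induction n; [simpl; unfold rsum; simpl; ring|]. rewrite !rsum_S, IHn; ring. Qed.

Lemma rsum_minus n F G : rsum n (fun i => F i - G i) = rsum n F - rsum n G.
Proof. induction n; [unfold rsum; simpl; ring|]. rewrite !rsum_S, IHn; ring. Qed.

Lemma rsum_scal n c F : rsum n (fun i => c * F i) = c * rsum n F.
Proof. induction n; [unfold rsum; simpl; ring|]. rewrite !rsum_S, IHn; ring. Qed.

Lemma rsum_le n F G : (forall i, (i < n)%nat -> F i <= G i) -> rsum n F <= rsum n G.
Proof.
  induction n; intros H; [unfold rsum; simpl; lra|]. rewrite !rsum_S.
  assert (F n <= G n) by (apply H; lia).
  assert (rsum n F <= rsum n G) by (apply IHn; intros; apply H; lia). lra.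
Qed.

Lemma rsum_lt n F G : (0 < n)%nat -> (forall i, (i < n)%nat -> F i < G i) -> rsum n F < rsum n G.
Proof.
  destruct n; [lia|]. intros _ H. rewrite !rsum_S.
  assert (F n < G n) by (apply H; lia).
  assert (rsum n F <= rsum n G) by (apply rsum_le; intros; left; apply H; lia). lra.
Qed.

Lemma rsum_zero n F : (forall i, (i < n)%nat -> F i = 0) -> rsum n F = 0.
Proof.
  induction n; intros H; [reflexivity|]. rewrite rsum_S, IHn, H; try lra; try lia.
  intros; apply H; lia.
Qed.

Lemma rsum_nonneg n F : (forall i, (i < n)%nat -> 0 <= F i) -> 0 <= rsum n F.
Proof.
  intros H. replace 0 with (rsum n (fun _ => 0)) by (apply rsum_zero; auto).
  apply rsum_le; auto.
Qed.

Lemma rsum_term n F j : (forall i, (i < n)%nat -> 0 <= F i) -> (j < n)%nat -> F j <= rsum n F.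
Proof.
  induction n; intros H Hj; [lia|]. rewrite rsum_S.
  destruct (Nat.eq_dec j n) as [->|Hn].
  - assert (0 <= rsum n F) by (apply rsum_nonneg; intros; apply H; lia). lra.
  - assert (F j <= rsum n F) by (apply IHn; [intros; apply H|]; lia).
    assert (0 <= F n) by (apply H; lia). lra.
Qed.

Lemma rsum_const n c : rsum n (fun _ => c) = INR n * c.
Proof. induction n; [unfold rsum; simpl; ring|]. rewrite rsum_S, IHn, S_INR; ring. Qed.

Lemma rsum_delta n v c : (v < n)%nat -> rsum n (fun s => if Nat.eqb s v then c else 0) = c.
Proof.
  induction n; intros Hv; [lia|]. rewrite rsum_S.
  destruct (Nat.eqb_spec n v).
  - subst. rewrite rsum_zero; [ring|]. intros i Hi.
    destruct (Nat.eqb_spec i v); [lia|auto].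
  - rewrite IHn; [ring|lia].
Qed.

Lemma rsum_pos_exists n F : 0 < rsum n F -> exists i, (i < n)%nat /\ 0 < F i.
Proof.
  intros H. apply NNPP; intros Hn.
  assert (rsum n F <= 0).
  { replace 0 with (rsum n (fun _ => 0)) by (apply rsum_zero; auto).
    apply rsum_le; intros i Hi. apply Rnot_lt_le; intro; apply Hn; eauto. }
  lra.
Qed.

Lemma rsum_avg_exists n F c : (0 < n)%nat -> INR n * c <= rsum n F ->
  exists i, (i < n)%nat /\ c <= F i.
Proof.
  intros Hn H. apply NNPP; intros Hne.
  assert (rsum n F < rsum n (fun _ => c)).
  { apply rsum_lt; auto. intros i Hi. apply Rnot_le_lt; intro; apply Hne; eauto. }
  rewrite rsum_const in H0. lra.
Qed.

Lemma fold_min_le (d : nat -> R) x0 l k : In k l -> fold_right Rmin x0 (map d l) <= d k.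
Proof.
  induction l; simpl; [tauto|]. intros [->|H].
  - apply Rmin_l.
  - eapply Rle_trans; [apply Rmin_r|auto].
Qed.

Lemma dmin_le K d k : (k < K)%nat -> dmin K d <= d k.
Proof. intros. unfold dmin. apply fold_min_le. apply in_seq. lia. Qed.

Lemma Rpower_pos x y : 0 < Rpower x y.
Proof. unfold Rpower; apply exp_pos. Qed.

Lemma rpow_nonneg t b : 0 <= rpow t b.
Proof.
  unfold rpow. destruct (Rle_dec t 0); [destruct (Req_EM_T b 0); lra|].
  left; apply Rpower_pos.
Qed.

Lemma rpow_pos t b : 0 < t -> rpow t b = Rpower t b.
Proof. intros. unfold rpow. destruct (Rle_dec t 0); [lra|auto]. Qed.

Lemma rpow_b0 t : rpow t 0 = 1.
Proof.
  unfold rpow. destruct (Rle_dec t 0).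
  - destruct (Req_EM_T 0 0); lra.
  - apply Rpower_O; lra.
Qed.

Lemma rpow_0 b : 0 < b -> rpow 0 b = 0.
Proof.
  intros. unfold rpow. destruct (Rle_dec 0 0); [|lra]. destruct (Req_EM_T b 0); lra.
Qed.

Lemma rpow_mono b x y : 0 <= b -> 0 <= y <= x -> rpow y b <= rpow x b.
Proof.
  intros Hb [Hy Hyx]. destruct Hy as [Hy| <-].
  - rewrite !rpow_pos by lra. apply Rle_Rpower_l; lra.
  - destruct Hb as [Hb| <-].
    + rewrite rpow_0 by auto. apply rpow_nonneg.
    + rewrite !rpow_b0; lra.
Qed.

Lemma rpow_mult b r f : 0 <= b -> 0 <= r -> 0 < f -> rpow (r * f) b = rpow r b * rpow f b.
Proof.
  intros Hb [Hr| <-] Hf.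
  - rewrite !rpow_pos; try nra. symmetry; apply Rpower_mult_distr; auto.
  - rewrite Rmult_0_l. destruct Hb as [Hb| <-].
    + rewrite rpow_0 by auto; ring.
    + rewrite !rpow_b0; ring.
Qed.

Lemma Rpower_small b : 0 < b -> forall e, 0 < e -> exists dl, 0 < dl /\
  forall y, 0 < y < dl -> Rpower y b < e.
Proof.
  intros Hb e He. exists (exp (ln e / b)). split; [apply exp_pos|].
  intros y [Hy Hyd]. unfold Rpower.
  assert (ln y < ln e / b).
  { rewrite <- (ln_exp (ln e / b)). apply ln_increasing; auto. }
  rewrite <- (exp_ln e) by auto. apply exp_increasing.
  apply (Rmult_lt_compat_l b) in H; auto.
  replace (b * (ln e / b)) with (ln e) in H by (field; lra). lra.
Qed.

Definition rlim (q : R -> R) (L : R) : Prop :=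
  forall e, 0 < e -> exists dl, 0 < dl /\ forall t, 0 < t < dl -> Rabs (q t - L) < e.

Lemma rlim_nonneg q L d0 : rlim q L -> 0 < d0 -> (forall t, 0 < t < d0 -> 0 <= q t) -> 0 <= L.
Proof.
  intros Hq Hd0 Hpos. apply Rnot_lt_le; intro HL.
  destruct (Hq (- L / 2)) as [dl [Hdl H]]; [lra|].
  set (t := Rmin dl d0 / 2).
  assert (0 < Rmin dl d0) by (apply Rmin_glb_lt; auto).
  assert (Rmin dl d0 <= dl) by apply Rmin_l. assert (Rmin dl d0 <= d0) by apply Rmin_r.
  specialize (H t ltac:(unfold t; lra)). specialize (Hpos t ltac:(unfold t; lra)).
  apply Rabs_def2 in H. lra.
Qed.

Lemma rlim_sum n (q : nat -> R -> R) (L : nat -> R) :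
  (forall a, (a < n)%nat -> rlim (q a) (L a)) ->
  rlim (fun t => rsum n (fun a => q a t)) (rsum n L).
Proof.
  induction n; intros H.
  - intros e He. exists 1; split; [lra|]. intros. rewrite !rsum_0. rewrite Rminus_0_r, Rabs_R0; auto.
  - intros e He.
    destruct (IHn (fun a Ha => H a ltac:(lia)) (e/2)) as [d1 [Hd1 H1]]; [lra|].
    destruct (H n ltac:(lia) (e/2)) as [d2 [Hd2 H2]]; [lra|].
    exists (Rmin d1 d2). split; [apply Rmin_glb_lt; auto|].
    intros t Ht. assert (Rmin d1 d2 <= d1) by apply Rmin_l. assert (Rmin d1 d2 <= d2) by apply Rmin_r.
    rewrite !rsum_S.
    specialize (H1 t ltac:(lra)). specialize (H2 t ltac:(lra)).
    replace (rsum n (fun a => q a t) + q n t - (rsum n L + L n)) with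
      ((rsum n (fun a => q a t) - rsum n L) + (q n t - L n)) by ring.
    eapply Rle_lt_trans; [apply Rabs_triang|]. lra.
Qed.

Lemma deriv_F g h b x : 0 < x ->
  derivable_pt_lim (fun y => y * (g * Rpower y b + h)) x (g * (1 + b) * Rpower x b + h).
Proof.
  intros Hx.
  assert (D : derivable_pt_lim (fun y => y * (g * Rpower y b + h)) x
     (1 * (g * Rpower x b + h) + x * (g * (b * Rpower x (b - 1)) + 0))).
  { apply (derivable_pt_lim_mult (fun y => y) (fun y => g * Rpower y b + h)).
    - apply derivable_pt_lim_id.
    - apply (derivable_pt_lim_plus (fun y => g * Rpower y b) (fun _ => h)).
      + apply (derivable_pt_lim_scal (fun y => Rpower y b)). apply derivable_pt_lim_power; auto.
      + apply derivable_pt_lim_const. }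
  replace (g * (1 + b) * Rpower x b + h) with
     (1 * (g * Rpower x b + h) + x * (g * (b * Rpower x (b - 1)) + 0)); auto.
  assert (E : x * Rpower x (b - 1) = Rpower x b).
  { unfold Rminus. rewrite Rpower_plus, Rpower_Ropp, Rpower_1 by auto. field.
    lra. }
  replace (x * (g * (b * Rpower x (b - 1)) + 0)) with (g * b * (x * Rpower x (b-1))) by ring.
  rewrite E. ring.
Qed.

Lemma key g h b x D : 0 <= b -> 0 <= x -> (x = 0 -> 0 <= D) ->
  rlim (fun t => ((x + t * D) * (g * rpow (x + t * D) b + h) - x * (g * rpow x b + h)) / t)
       ((g * (1 + b) * rpow x b + h) * D).
Proof.
  intros Hb Hx HD e He.
  destruct (Req_dec D 0) as [HD0|HD0].
  { subst D. exists 1; split; [lra|]. intros t Ht.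
    replace (x + t * 0) with x by ring. unfold Rdiv.
    replace ((x * (g * rpow x b + h) - x * (g * rpow x b + h)) * / t -
             (g * (1 + b) * rpow x b + h) * 0) with 0 by ring.
    rewrite Rabs_R0; auto. }
  destruct Hx as [Hx| <-].
  - destruct (deriv_F g h b x Hx (e / Rabs D)) as [dl Hdl].
    { apply Rdiv_lt_0_compat; auto. apply Rabs_pos_lt; auto. }
    assert (HaD : 0 < Rabs D) by (apply Rabs_pos_lt; auto).
    exists (Rmin (dl / Rabs D) (x / Rabs D)). split.
    { apply Rmin_glb_lt; apply Rdiv_lt_0_compat; auto. apply cond_pos. }
    intros t [Ht Htd].
    assert (T1 : t < dl / Rabs D) by (eapply Rlt_le_trans; [apply Htd| apply Rmin_l]).
    assert (T2 : t < x / Rabs D) by (eapply Rlt_le_trans; [apply Htd| apply Rmin_r]).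
    assert (Hh : Rabs (t * D) < dl).
    { rewrite Rabs_mult, Rabs_pos_eq by lra.
      apply (Rmult_lt_compat_r (Rabs D)) in T1; auto.
      replace (dl / Rabs D * Rabs D) with (pos dl) in T1 by (field; lra). lra. }
    assert (Hxh : 0 < x + t * D).
    { assert (Rabs (t * D) < x).
      { rewrite Rabs_mult, Rabs_pos_eq by lra.
        apply (Rmult_lt_compat_r (Rabs D)) in T2; auto.
        replace (x / Rabs D * Rabs D) with x in T2 by (field; lra). lra. }
      assert (- (t*D) <= Rabs (t*D)) by (rewrite <- Rabs_Ropp; apply RRle_abs). lra. }
    specialize (Hdl (t * D) ltac:(apply Rmult_integral_contrapositive; split; lra) Hh).
    rewrite !rpow_pos by auto.
    replace (((x + t * D) * (g * Rpower (x + t * D) b + h) - x * (g * Rpower x b + h)) / t -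
             (g * (1 + b) * Rpower x b + h) * D) with
       (D * (((x + t * D) * (g * Rpower (x + t * D) b + h) - x * (g * Rpower x b + h)) / (t * D) -
             (g * (1 + b) * Rpower x b + h))) by (field; lra).
    rewrite Rabs_mult.
    apply (Rmult_lt_compat_l (Rabs D)) in Hdl; auto.
    replace (Rabs D * (e / Rabs D)) with e in Hdl by (field; lra). exact Hdl.
  - assert (HD' : 0 < D) by (specialize (HD eq_refl); lra).
    destruct Hb as [Hb| <-].
    + rewrite rpow_0 by auto.
      destruct (Rpower_small b Hb (e / (Rabs (g * D) + 1))) as [dl [Hdl H]].
      { apply Rdiv_lt_0_compat; auto. pose proof (Rabs_pos (g*D)); lra. }
      exists (dl / D). split; [apply Rdiv_lt_0_compat; auto|].
      intros t [Ht Htd].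
      assert (Hy : 0 < t * D < dl).
      { split; [nra|]. apply (Rmult_lt_compat_r D) in Htd; auto.
        replace (dl / D * D) with dl in Htd by (field; lra). lra. }
      specialize (H _ Hy).
      replace (0 + t * D) with (t * D) by ring.
      rewrite rpow_pos in * by lra.
      replace ((t * D * (g * Rpower (t * D) b + h) - 0 * (g * 0 + h)) / t -
               (g * (1 + b) * 0 + h) * D) with ((g * D) * Rpower (t * D) b) by (field; lra).
      rewrite Rabs_mult, (Rabs_pos_eq (Rpower _ _)) by (left; apply Rpower_pos).
      pose proof (Rabs_pos (g*D)).
      apply Rle_lt_trans with ((Rabs (g * D) + 1) * Rpower (t * D) b).
      { pose proof (Rpower_pos (t*D) b). nra. }
      apply (Rmult_lt_compat_l (Rabs (g * D) + 1)) in H; [|lra].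
      replace ((Rabs (g * D) + 1) * (e / (Rabs (g * D) + 1))) with e in H by (field; lra). lra.
    + exists 1. split; [lra|]. intros t Ht. rewrite !rpow_b0.
      replace (((0 + t * D) * (g * 1 + h) - 0 * (g * 1 + h)) / t - (g * (1 + 0) * 1 + h) * D)
        with 0 by (field; lra). rewrite Rabs_R0; auto.
Qed.

Definition Msum nA nS (r : nat -> nat -> R) (gam eta : nat -> R) beta f s :=
  rsum nA (fun a => r a s * (gam a * (1 + beta) * rpow (load nS r f a) beta + eta a)).

Lemma load_nonneg nS r f a : (forall s, (s < nS)%nat -> 0 <= r a s) ->
  (forall s, (s < nS)%nat -> 0 <= f s) -> 0 <= load nS r f a.
Proof. intros. unfold load. apply rsum_nonneg. intros. apply Rmult_le_pos; auto. Qed.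

Lemma load_ge nS r f a u : (forall s, (s < nS)%nat -> 0 <= r a s) ->
  (forall s, (s < nS)%nat -> 0 <= f s) -> (u < nS)%nat -> r a u * f u <= load nS r f a.
Proof.
  intros. unfold load. apply (rsum_term nS (fun s => r a s * f s)); auto.
  intros. apply Rmult_le_pos; auto.
Qed.

Lemma kkt nA nS K grp r gam eta beta d f u v :
  (forall a s, (a < nA)%nat -> (s < nS)%nat -> 0 <= r a s) ->
  0 <= beta ->
  SO_profile nA nS K grp r gam eta beta d f ->
  (u < nS)%nat -> (v < nS)%nat -> grp u = grp v -> 0 < f u ->
  Msum nA nS r gam eta beta f u <= Msum nA nS r gam eta beta f v.
Proof.
  intros Hr Hb [[Hf0 Hfs] Hmin] Hu Hv Hg Hfu.
  set (g := fun t s => f s + (if Nat.eqb s v then t else 0) - (if Nat.eqb s u then t else 0)).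
  assert (Hload : forall t a, load nS r (g t) a = load nS r f a + t * (r a v - r a u)).
  { intros t a. unfold load.
    rewrite (rsum_ext nS _ (fun s => (r a s * f s + (if Nat.eqb s v then r a v * t else 0))
                                   - (if Nat.eqb s u then r a u * t else 0))).
    - rewrite rsum_minus, rsum_plus, !rsum_delta by auto. ring.
    - intros s _. unfold g. destruct (Nat.eqb_spec s v); destruct (Nat.eqb_spec s u); subst; ring. }
  assert (Hfeas : forall t, 0 < t < f u -> feasible nS K grp d (g t)).
  { intros t Ht. split.
    - intros s Hs. unfold g. specialize (Hf0 s Hs).
      destruct (Nat.eqb_spec s v); destruct (Nat.eqb_spec s u); subst; lra.
    - intros k Hk. rewrite <- (Hfs k Hk).
      set (e := if Nat.eqb (grp u) k then t else 0).
      rewrite (rsum_ext nS _ (fun s => ((if Nat.eqb (grp s) k then f s else 0)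
              + (if Nat.eqb s v then e else 0)) - (if Nat.eqb s u then e else 0))).
      + rewrite rsum_minus, rsum_plus, !rsum_delta by auto. ring.
      + intros s _. unfold g, e. destruct (Nat.eqb_spec s v) as [E1|E1];
          destruct (Nat.eqb_spec s u) as [E2|E2]; try rewrite E1; try rewrite E2;
          rewrite ?Hg; destruct (Nat.eqb (grp v) k); destruct (Nat.eqb (grp s) k); ring. }
  set (x := fun a => load nS r f a).
  set (D := fun a => r a v - r a u).
  assert (HL : rlim (fun t => rsum nA (fun a =>
      ((x a + t * D a) * (gam a * rpow (x a + t * D a) beta + eta a) - x a * (gam a * rpow (x a) beta + eta a)) / t))
      (rsum nA (fun a => (gam a * (1 + beta) * rpow (x a) beta + eta a) * D a))).
  { apply (rlim_sum nA (fun a t => ((x a + t * D a) * (gam a * rpow (x a + t * D a) beta + eta a) - x a * (gam a * rpow (x a) beta + eta a)) / t)).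
    intros a Ha. apply key; auto.
    - apply load_nonneg; auto.
    - intros Hx0. unfold D.
      assert (r a u * f u <= x a) by (apply load_ge; auto).
      assert (0 <= r a u) by auto. assert (0 <= r a v) by auto.
      assert (r a u = 0) by nra. lra. }
  apply rlim_nonneg with (d0 := f u) in HL; auto.
  - assert (E : rsum nA (fun a => (gam a * (1 + beta) * rpow (x a) beta + eta a) * D a) =
                Msum nA nS r gam eta beta f v - Msum nA nS r gam eta beta f u).
    { unfold Msum. rewrite <- rsum_minus. apply rsum_ext. intros. unfold D, x. ring. }
    lra.
  - intros t Ht.
    assert (Hc := Hmin _ (Hfeas t Ht)).
    assert (E : rsum nA (fun a =>
      ((x a + t * D a) * (gam a * rpow (x a + t * D a) beta + eta a) - x a * (gam a * rpow (x a) beta + eta a)) / t)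
      = / t * (cost nA nS r gam eta beta (g t) - cost nA nS r gam eta beta f)).
    { unfold cost. rewrite <- rsum_minus, <- rsum_scal. apply rsum_ext. intros a _.
      rewrite Hload. unfold tau, x, D, Rdiv. ring. }
    rewrite E. apply Rmult_le_pos; [left; apply Rinv_0_lt_compat; lra | lra].
Qed.

Theorem theorem5
  (nA nS K : nat) (grp : nat -> nat) (r : nat -> nat -> R)
  (gam eta : nat -> R) (beta : R)
  (HK : (1 <= K)%nat)
  (Hgrp : forall s, (s < nS)%nat -> (grp s < K)%nat)
  (Hne : forall k, (k < K)%nat -> exists s, (s < nS)%nat /\ grp s = k)
  (Hr : forall a s, (a < nA)%nat -> (s < nS)%nat -> 0 <= r a s)
  (Hrs : forall s, (s < nS)%nat -> 0 < rsum nA (fun a => r a s))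
  (Hra : forall a, (a < nA)%nat -> 0 < rsum nS (fun s => r a s))
  (Hgam : forall a, (a < nA)%nat -> 0 < gam a)
  (Heta : forall a, (a < nA)%nat -> 0 < eta a)
  (Hbeta : 0 <= beta) :
  exists c : R, 0 < c /\
    forall d : nat -> R,
      (forall k, (k < K)%nat -> 0 <= d k) ->
      0 < dmin K d ->
      forall f : nat -> R,
        SO_profile nA nS K grp r gam eta beta d f ->
        approx_NE nA nS K grp r gam eta beta (c * Rpower (dmin K d) (- beta)) d f.
Proof.
  assert (HnS : (0 < nS)%nat).
  { destruct (Hne 0%nat ltac:(lia)) as [s [Hs _]]. lia. }
  set (E := fun s => rsum nA (fun a => r a s * eta a)).
  set (Etot := rsum nS E).
  set (phi := fun s => rsum nA (fun a => r a s * gam a * rpow (r a s) beta)).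
  set (Phi := rsum nS (fun s => / phi s)).
  assert (HE0 : forall s, (s < nS)%nat -> 0 <= E s).
  { intros s Hs. apply rsum_nonneg. intros a Ha. apply Rmult_le_pos; auto. left; auto. }
  assert (HEtot : forall s, (s < nS)%nat -> E s <= Etot).
  { intros s Hs. apply (rsum_term nS E); auto. }
  assert (HEt0 : 0 <= Etot) by (apply rsum_nonneg; auto).
  assert (Hphi : forall s, (s < nS)%nat -> 0 < phi s).
  { intros s Hs. destruct (rsum_pos_exists _ _ (Hrs s Hs)) as [a [Ha Hpos]].
    apply Rlt_le_trans with (r a s * gam a * rpow (r a s) beta).
    - rewrite rpow_pos by auto. specialize (Hgam a Ha). pose proof (Rpower_pos (r a s) beta).
      apply Rmult_lt_0_compat; [apply Rmult_lt_0_compat|]; auto.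
    - apply (rsum_term nA (fun a => r a s * gam a * rpow (r a s) beta)); auto.
      intros i Hi. apply Rmult_le_pos; [apply Rmult_le_pos|apply rpow_nonneg]; auto.
      left; auto. }
  assert (HPhi_t : forall s, (s < nS)%nat -> / phi s <= Phi).
  { intros s Hs. apply (rsum_term nS (fun s => / phi s)); auto.
    intros i Hi. left. apply Rinv_0_lt_compat; auto. }
  assert (HPhi : 0 < Phi).
  { apply Rlt_le_trans with (/ phi 0%nat); [apply Rinv_0_lt_compat; auto|auto]. }
  set (K0 := Rpower (/ INR nS) beta / ((1 + beta) * Phi)).
  assert (HK0 : 0 < K0).
  { unfold K0. apply Rdiv_lt_0_compat; [apply Rpower_pos|]. apply Rmult_lt_0_compat; lra. }
  exists ((beta * Etot + 1) / K0). split.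
  { apply Rdiv_lt_0_compat; auto. nra. }
  intros d Hd0 Hdmin f Hso.
  split; [exact (proj1 Hso)|].
  destruct Hso as [[Hf0 Hfs] Hmin] eqn:Hso'. clear Hso'.
  set (dm := dmin K d) in *.
  set (P := fun s => sprice nA nS r gam eta beta f s).
  set (M := fun s => Msum nA nS r gam eta beta f s).
  assert (HMP : forall s, M s = (1 + beta) * P s - beta * E s).
  { intros s. unfold M, P, E, Msum, sprice, tau.
    rewrite <- rsum_scal, <- rsum_scal, <- rsum_minus. apply rsum_ext. intros; ring. }
  assert (HPE : forall s, (s < nS)%nat -> E s <= P s).
  { intros s Hs. unfold E, P, sprice, tau. apply rsum_le. intros a Ha.
    assert (0 <= r a s) by auto. assert (0 < gam a) by auto.
    pose proof (rpow_nonneg (load nS r f a) beta). 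
    assert (0 <= r a s * (gam a * rpow (load nS r f a) beta)) by (apply Rmult_le_pos; nra).
    nra. }
  assert (HMgeP : forall s, (s < nS)%nat -> P s <= M s).
  { intros s Hs. rewrite HMP. assert (E s <= P s) by auto. nra. }
  intros s s' Hs Hs' Hgs Hfs0.
  set (k := grp s).
  assert (Hk : (k < K)%nat) by (apply Hgrp; auto).
  assert (Hdk : dm <= d k) by (apply dmin_le; auto).
  assert (HnR : 0 < INR nS) by (apply lt_0_INR; auto).
  destruct (rsum_avg_exists nS (fun u => if Nat.eqb (grp u) k then f u else 0) (d k / INR nS) HnS)
    as [s0 [Hs0 Hs0f]].
  { rewrite (Hfs k Hk). right. field. lra. }
  assert (Hdkpos : 0 < d k / INR nS) by (apply Rdiv_lt_0_compat; lra).
  destruct (Nat.eqb_spec (grp s0) k) as [Hg0|Hg0]; [|lra].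
  assert (Hfs0pos : 0 < f s0) by lra.
  assert (HP0 : phi s0 * rpow (f s0) beta <= P s0).
  { unfold phi, P, sprice, tau. rewrite Rmult_comm, <- rsum_scal. apply rsum_le. intros a Ha.
    assert (Hra0 : 0 <= r a s0) by auto. assert (0 < gam a) by auto. assert (0 < eta a) by auto.
    assert (Hmono : rpow (r a s0) beta * rpow (f s0) beta <= rpow (load nS r f a) beta).
    { rewrite <- rpow_mult by auto. apply rpow_mono; auto. split; [nra|].
      apply load_ge; auto. }
    pose proof (rpow_nonneg (r a s0) beta). pose proof (rpow_nonneg (f s0) beta).
    assert (r a s0 * gam a * (rpow (r a s0) beta * rpow (f s0) beta) <=
            r a s0 * gam a * rpow (load nS r f a) beta).
    { apply Rmult_le_compat_l; auto. apply Rmult_le_pos; lra. }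
    assert (0 <= r a s0 * eta a) by nra. nra. }
  assert (Hrp : Rpower dm beta * Rpower (/ INR nS) beta <= rpow (f s0) beta).
  { rewrite Rpower_mult_distr by (try apply Rinv_0_lt_compat; lra).
    rewrite <- rpow_pos by (apply Rmult_lt_0_compat; [lra| apply Rinv_0_lt_compat; lra]).
    apply rpow_mono; auto. split.
    - left. apply Rmult_lt_0_compat; [lra| apply Rinv_0_lt_compat; lra].
    - apply Rle_trans with (d k / INR nS); [|lra]. unfold Rdiv.
      apply Rmult_le_compat_r; [left; apply Rinv_0_lt_compat|]; lra. }
  assert (Hphi0 : / Phi <= phi s0).
  { rewrite <- (Rinv_inv (phi s0)). apply Rinv_le_contravar; auto.
    apply Rinv_0_lt_compat; auto. }
  set (Q := Rpower dm beta * Rpower (/ INR nS) beta).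
  assert (HQ : 0 < Q) by (apply Rmult_lt_0_compat; apply Rpower_pos).
  assert (HP0' : Q / Phi <= P s0).
  { eapply Rle_trans; [|apply HP0]. unfold Rdiv.
    rewrite Rmult_comm. apply Rmult_le_compat; auto.
    - left; apply Rinv_0_lt_compat; auto.
    - left; auto. }
  assert (Hk1 : M s0 <= M s').
  { apply (kkt nA nS K grp r gam eta beta d f); auto. rewrite Hg0; unfold k; exact Hgs. }
  assert (Hk2 : M s <= M s').
  { apply (kkt nA nS K grp r gam eta beta d f); auto. }
  assert (HEs' := HE0 s' Hs'). assert (HEs := HE0 s Hs). assert (HEts := HEtot s Hs).
  assert (HPs' : Q / Phi <= (1 + beta) * P s').
  { assert (P s0 <= M s0) by auto. rewrite (HMP s') in Hk1.
    assert (0 <= beta * E s') by (apply Rmult_le_pos; auto). lra. }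
  assert (HPs : P s <= P s' + beta * Etot).
  { rewrite !HMP in Hk2.
    assert (0 <= beta * E s') by (apply Rmult_le_pos; auto).
    assert (beta * E s <= beta * Etot) by (apply Rmult_le_compat_l; auto).
    assert (P s <= P s' + beta * E s).
    { apply (Rmult_le_reg_l (1 + beta)); [lra|].
      assert (0 <= beta * (beta * E s)) by (apply Rmult_le_pos; auto; apply Rmult_le_pos; auto).
      lra. }
    lra. }
  assert (HPs'K : Rpower dm beta * K0 <= P s').
  { unfold K0. apply (Rmult_le_reg_l ((1 + beta) * Phi)); [nra|].
    replace ((1 + beta) * Phi * (Rpower dm beta * (Rpower (/ INR nS) beta / ((1 + beta) * Phi))))
      with Q by (unfold Q; field; lra).
    apply (Rmult_le_reg_r (/ Phi)); [apply Rinv_0_lt_compat; auto|].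
    replace ((1 + beta) * Phi * P s' * / Phi) with ((1 + beta) * P s') by (field; lra).
    exact HPs'. }
  fold P.
  assert (Hinv : Rpower dm (- beta) * Rpower dm beta = 1).
  { rewrite Rpower_Ropp. field. apply Rgt_not_eq, Rpower_pos. }
  assert (Hpow : 0 < Rpower dm (- beta)) by apply Rpower_pos.
  assert (Hc : 0 < (beta * Etot + 1) / K0) by (apply Rdiv_lt_0_compat; auto; nra).
  assert (((beta * Etot + 1) / K0 * Rpower dm (- beta)) * (Rpower dm beta * K0) = beta * Etot + 1).
  { replace ((beta * Etot + 1) / K0 * Rpower dm (- beta) * (Rpower dm beta * K0)) with
      ((beta * Etot + 1) * (Rpower dm (- beta) * Rpower dm beta)) by (field; lra).
    rewrite Hinv; ring. }
  assert (0 <= (beta * Etot + 1) / K0 * Rpower dm (- beta)) by (left; apply Rmult_lt_0_compat; auto).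
  assert (((beta * Etot + 1) / K0 * Rpower dm (- beta)) * (Rpower dm beta * K0) <=
          ((beta * Etot + 1) / K0 * Rpower dm (- beta)) * P s') by (apply Rmult_le_compat_l; auto).
  nra.
Qed.
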